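(* Let $\kappa>0$ and define $g:\mathbb{R}\to\mathbb{R}$ by $g(t)=\sqrt{1-\kappa t^2}$ if $0\leq t<\sqrt{1/(3\kappa)}$, $g(t)=\frac{1}{3\sqrt{2\kappa}\,t}+\sqrt{\frac16}$ if $t\geq\sqrt{1/(3\kappa)}$, and $g(t)=g(-t)$ for $t<0$. Let $G(t)=\int_0^t g(s)\,ds$ and let $G^{-1}$ denote its inverse function. Then: (1) $\lim_{t\to0}\frac{G^{-1}(t)}{t}=1$; (2) $\lim_{t\to\infty}\frac{G^{-1}(t)}{t}=\sqrt6$; (3) $t\leq G^{-1}(t)\leq\sqrt6\,t$ for all $t\geq0$; (4) $-\frac12\leq \frac{t}{g(t)}g'(t)\leq 0$ for all $t\geq 0$.
   Context: The function $g$ is $C^1$, even, takes values in $(\sqrt{1/6},1]$, and $G$ is a strictly increasing odd $C^2$ bijection of $\mathbb{R}$. *)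

(* Defs.v *)
From Stdlib Require Import Reals.
From Coquelicot Require Import Coquelicot.
Open Scope R_scope.

Definition g_pos (kappa t : R) : R :=
  if Rlt_dec t (sqrt (1 / (3 * kappa)))
  then sqrt (1 - kappa * t ^ 2)
  else 1 / (3 * sqrt (2 * kappa) * t) + sqrt (1 / 6).

Definition g (kappa t : R) : R :=
  if Rle_dec 0 t then g_pos kappa t else g_pos kappa (- t).

Definition G (kappa t : R) : R := RInt (g kappa) 0 t.

(* Main.v *)
Require Import Defs.
From Stdlib Require Import Reals Lra Psatz.
From Coquelicot Require Import Coquelicot.
Open Scope R_scope.

Section S.
Variable k : R.
Hypothesis Hk : 0 < k.

Let a := sqrt (1 / (3 * k)).
Let s2 := sqrt (2 * k).
Let s6 := sqrt (1 / 6).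

Lemma a_pos : 0 < a.
Proof. apply sqrt_lt_R0. apply Rdiv_lt_0_compat; lra. Qed.
Lemma a_sq : a * a = 1 / (3 * k).
Proof. apply sqrt_sqrt. apply Rlt_le, Rdiv_lt_0_compat; lra. Qed.
Lemma s2_pos : 0 < s2.
Proof. apply sqrt_lt_R0. lra. Qed.
Lemma s2_sq : s2 * s2 = 2 * k.
Proof. apply sqrt_sqrt. lra. Qed.
Lemma s6_pos : 0 < s6.
Proof. apply sqrt_lt_R0. lra. Qed.
Lemma s6_sq : s6 * s6 = 1 / 6.
Proof. apply sqrt_sqrt. lra. Qed.
Lemma ka2 : k * (a * a) = 1/3.
Proof. rewrite a_sq. field. lra. Qed.
Lemma ca : 1 / (3 * s2 * a) = s6.
Proof.
  pose proof a_pos; pose proof s2_pos; pose proof s6_pos.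
  pose proof a_sq; pose proof s2_sq; pose proof s6_sq.
  assert (P: (3*s2*a) * s6 = 1).
  { assert (E: (3*s2*a*s6)*(3*s2*a*s6) = 1).
    { replace ((3*s2*a*s6)*(3*s2*a*s6)) with (9*(s2*s2)*(a*a)*(s6*s6)) by ring.
      rewrite H2, H3, H4. field. lra. }
    assert (0 < 3*s2*a*s6) by (repeat apply Rmult_lt_0_compat; lra). nra. }
  assert (0 < 3*s2*a) by (repeat apply Rmult_lt_0_compat; lra).
  field_simplify_eq; lra.
Qed.

Definition f2 (s : R) := 1 / (3 * s2 * s) + s6.

Lemma g_mid s : Rabs s < a -> g k s = sqrt (1 - k * s ^ 2).
Proof.
  intros H. unfold g, g_pos. fold a.
  destruct (Rle_dec 0 s); destruct (Rlt_dec _ a).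
  - reflexivity.
  - rewrite Rabs_right in H; lra.
  - f_equal. ring.
  - rewrite Rabs_left in H; lra.
Qed.

Lemma g_right s : a <= s -> g k s = f2 s.
Proof.
  intros H. pose proof a_pos. unfold g, g_pos, f2. fold a s2 s6.
  destruct (Rle_dec 0 s); [|lra]. destruct (Rlt_dec s a); [lra|]. reflexivity.
Qed.

Lemma g_left s : s <= -a -> g k s = f2 (-s).
Proof.
  intros H. pose proof a_pos. unfold g, g_pos, f2. fold a s2 s6.
  destruct (Rle_dec 0 s); [lra|]. destruct (Rlt_dec (-s) a); [lra|]. reflexivity.
Qed.

Lemma f2_bounds s : a <= s -> s6 < f2 s <= 2 * s6.
Proof.
  intros H. pose proof a_pos; pose proof s2_pos; pose proof s6_pos.
  unfold f2. split.
  - assert (0 < 1 / (3*s2*s)). { apply Rdiv_lt_0_compat; [lra|]. repeat apply Rmult_lt_0_compat; lra. } lra.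
  - pose proof ca. assert (1 / (3 * s2 * s) <= 1/(3*s2*a)); [|lra].
    unfold Rdiv; apply Rmult_le_compat_l; [lra|]. apply Rinv_le_contravar; [repeat apply Rmult_lt_0_compat; lra|].
    apply Rmult_le_compat_l; nra.
Qed.

Lemma sqrt_mid_bounds s : Rabs s < a -> 1 - k * s^2 <= sqrt (1 - k * s^2) /\ s6 <= sqrt (1 - k*s^2) <= 1.
Proof.
  intros H. pose proof a_pos. pose proof ka2.
  assert (Hs: s^2 < a*a). { assert (HH: Rabs s * Rabs s < a * a). { apply Rmult_le_0_lt_compat; try lra; apply Rabs_pos. }
    rewrite <- Rabs_mult in HH. simpl. rewrite Rmult_1_r. rewrite Rabs_right in HH; [lra|]. apply Rle_ge; nra. }
  assert (Hy: 2/3 < 1 - k*s^2 <= 1). { split; [|nra]. assert (k * s^2 < k*(a*a)) by (apply Rmult_lt_compat_l; lra). lra. }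
  pose proof (sqrt_sqrt (1 - k*s^2) ltac:(lra)). pose proof (sqrt_pos (1 - k*s^2)).
  set (q := sqrt (1 - k*s^2)) in *.
  pose proof s6_sq; pose proof s6_pos.
  split; [nra|]. split; nra.
Qed.

Lemma g_bounds s : s6 <= g k s <= 1.
Proof.
  pose proof a_pos. pose proof s6_sq; pose proof s6_pos.
  assert (h2: 2 * s6 <= 1) by nra.
  destruct (Rlt_dec (Rabs s) a).
  - rewrite g_mid; auto. apply sqrt_mid_bounds; auto.
  - destruct (Rle_dec 0 s).
    + rewrite Rabs_right in n; [|lra]. rewrite g_right; [|lra]. pose proof (f2_bounds s ltac:(lra)). lra.
    + rewrite Rabs_left in n; [|lra]. rewrite g_left; [|lra]. pose proof (f2_bounds (-s) ltac:(lra)). lra.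
Qed.


Lemma exg_mid : ex_RInt (g k) (-a) a.
Proof.
  pose proof a_pos. pose proof ka2.
  apply ex_RInt_ext with (f := fun s => sqrt (1 - k * s^2)).
  - intros x Hx. rewrite Rmin_left in Hx by lra. rewrite Rmax_right in Hx by lra.
    rewrite g_mid; auto. apply Rabs_def1; lra.
  - apply (@ex_RInt_continuous R_CompleteNormedModule). intros z Hz. rewrite Rmin_left in Hz by lra. rewrite Rmax_right in Hz by lra.
    apply (@ex_derive_continuous R_AbsRing R_NormedModule). auto_derive.
    assert (z^2 <= a*a) by nra. nra.
Qed.

Lemma exg_right M : a <= M -> ex_RInt (g k) a M.
Proof.
  intros HM. pose proof a_pos. pose proof s2_pos.
  apply ex_RInt_ext with (f := f2).
  - intros x Hx. rewrite Rmin_left in Hx by lra. rewrite Rmax_right in Hx by lra.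
    rewrite g_right; auto. lra.
  - apply (@ex_RInt_continuous R_CompleteNormedModule). intros z Hz. rewrite Rmin_left in Hz by lra. rewrite Rmax_right in Hz by lra.
    apply (@ex_derive_continuous R_AbsRing R_NormedModule). unfold f2. auto_derive.
    assert (0 < 3*s2*z) by (repeat apply Rmult_lt_0_compat; lra). lra.
Qed.

Lemma exg_left M : a <= M -> ex_RInt (g k) (-M) (-a).
Proof.
  intros HM. pose proof a_pos. pose proof s2_pos.
  apply ex_RInt_ext with (f := fun s => f2 (-s)).
  - intros x Hx. rewrite Rmin_left in Hx by lra. rewrite Rmax_right in Hx by lra.
    rewrite g_left; auto. lra.
  - apply (@ex_RInt_continuous R_CompleteNormedModule). intros z Hz. rewrite Rmin_left in Hz by lra. rewrite Rmax_right in Hz by lra.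
    apply (@ex_derive_continuous R_AbsRing R_NormedModule). unfold f2. auto_derive.
    assert (0 < 3*s2*(-z)) by (repeat apply Rmult_lt_0_compat; lra). lra.
Qed.

Lemma exg u v : ex_RInt (g k) u v.
Proof.
  pose proof a_pos.
  assert (Hsym: forall u v, u <= v -> ex_RInt (g k) u v).
  { clear u v. intros u v Huv.
    set (M := Rmax a (Rmax (Rabs u) (Rabs v))).
    assert (HaM: a <= M) by apply Rmax_l.
    assert (HuM: Rabs u <= M) by (unfold M; eapply Rle_trans; [apply Rmax_l|apply Rmax_r]).
    assert (HvM: Rabs v <= M) by (unfold M; eapply Rle_trans; [apply Rmax_r|apply Rmax_r]).
    assert (Hall: ex_RInt (g k) (-M) M).
    { apply ex_RInt_Chasles with (-a). apply exg_left; auto.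
      apply ex_RInt_Chasles with a. apply exg_mid. apply exg_right; auto. }
    pose proof (Rabs_le_between' u 0 M) as B1. pose proof (Rabs_le_between' v 0 M) as B2.
    rewrite Rminus_0_r in B1, B2.
    assert (-M <= u /\ u <= M) by (split; [apply Rabs_le_between in HuM|apply Rabs_le_between in HuM]; lra).
    assert (-M <= v /\ v <= M) by (split; [apply Rabs_le_between in HvM|apply Rabs_le_between in HvM]; lra).
    apply (@ex_RInt_Chasles_2 R_CompleteNormedModule) with (-M). lra.
    apply (@ex_RInt_Chasles_1 R_CompleteNormedModule) with M. lra. exact Hall. }
  destruct (Rle_dec u v). apply Hsym; auto. apply ex_RInt_swap. apply Hsym; lra.
Qed.


Lemma RInt_bounds u v lo hi : u <= v ->
  (forall s, u < s < v -> lo <= g k s <= hi) ->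
  lo * (v - u) <= RInt (g k) u v <= hi * (v - u).
Proof.
  intros Huv Hb.
  assert (C: forall c, RInt (fun _ => c) u v = c * (v - u)).
  { intros c. rewrite RInt_const. unfold scal; simpl; unfold mult; simpl. ring. }
  split.
  - rewrite <- C. apply RInt_le; auto. apply ex_RInt_const. apply exg. intros; apply Hb; auto.
  - rewrite <- C. apply RInt_le; auto. apply exg. apply ex_RInt_const. intros; apply Hb; auto.
Qed.

Lemma G_neg x : G k x = - RInt (g k) x 0.
Proof. unfold G. rewrite <- opp_RInt_swap by apply exg. reflexivity. Qed.

Lemma K1 x : s6 * (x * x) <= G k x * x <= x * x.
Proof.
  pose proof s6_pos.
  destruct (Rle_dec 0 x).
  - pose proof (RInt_bounds 0 x s6 1 r (fun s _ => g_bounds s)). unfold G. nra.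
  - pose proof (RInt_bounds x 0 s6 1 ltac:(lra) (fun s _ => g_bounds s)). rewrite G_neg. nra.
Qed.

Lemma sq_abs y : y * y = Rabs y * Rabs y.
Proof. rewrite <- Rabs_mult, Rabs_pos_eq; nra. Qed.

Lemma K2 x : Rabs x < a -> (1 - k * (x*x)) * (x * x) <= G k x * x.
Proof.
  intros Hx.
  assert (Hb: forall s, Rabs s <= Rabs x -> 1 - k * (x*x) <= g k s).
  { intros s Hs. rewrite g_mid by lra. destruct (sqrt_mid_bounds s ltac:(lra)) as [H1 _].
    assert (s*s <= x*x). { rewrite (sq_abs s), (sq_abs x). pose proof (Rabs_pos s). nra. }
    assert (k*(s^2) <= k*(x*x)) by (apply Rmult_le_compat_l; simpl; lra). lra. }
  destruct (Rle_dec 0 x).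
  - assert (forall s, 0 < s < x -> 1 - k*(x*x) <= g k s <= 1).
    { intros s Hs. split. apply Hb. rewrite !Rabs_right; lra. apply g_bounds. }
    pose proof (RInt_bounds 0 x _ _ r H). unfold G. nra.
  - assert (forall s, x < s < 0 -> 1 - k*(x*x) <= g k s <= 1).
    { intros s Hs. split. apply Hb. rewrite !Rabs_left; lra. apply g_bounds. }
    pose proof (RInt_bounds x 0 _ _ ltac:(lra) H). rewrite G_neg. nra.
Qed.

Lemma K3 d : 0 < d -> exists M, 0 < M /\ forall x, M <= x -> G k x <= M + x * (s6 + d).
Proof.
  intros Hd. pose proof a_pos. pose proof s2_pos. pose proof s6_pos.
  set (M := Rmax a (1 / (3 * s2 * d))).
  assert (HaM: a <= M) by apply Rmax_l.
  assert (HdM: 1 / (3 * s2 * d) <= M) by apply Rmax_r.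
  exists M. split. lra. intros x Hx.
  assert (Hb: forall s, M < s < x -> 0 <= g k s <= s6 + d).
  { intros s Hs. rewrite g_right by lra. pose proof (f2_bounds s ltac:(lra)). split. lra.
    unfold f2. assert (1 / (3*s2*s) <= d); [|lra].
    assert (/d <= 3*s2*s). { replace (/d) with (3*s2 * (1/(3*s2*d))) by (field; lra). apply Rmult_le_compat_l; lra. }
    unfold Rdiv; rewrite Rmult_1_l. rewrite <- (Rinv_inv d).
    apply Rinv_le_contravar; [apply Rinv_0_lt_compat; lra | assumption]. }
  pose proof (RInt_bounds M x _ _ Hx Hb).
  pose proof (K1 M). 
  assert (G k M <= M). { apply Rmult_le_reg_r with M; lra. }
  assert (E: G k x = G k M + RInt (g k) M x).
  { unfold G. rewrite <- (RInt_Chasles (g k) 0 M x) by apply exg. reflexivity. }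
  rewrite E. nra.
Qed.


Lemma glue (f h1 h2 : R -> R) x l d : 0 < d -> derivable_pt_lim h1 x l -> derivable_pt_lim h2 x l ->
  (forall y, x - d < y <= x -> f y = h1 y) -> (forall y, x <= y < x + d -> f y = h2 y) ->
  derivable_pt_lim f x l.
Proof.
  intros Hd H1 H2 E1 E2 eps Heps.
  destruct (H1 eps Heps) as [d1 P1]. destruct (H2 eps Heps) as [d2 P2].
  assert (0 < Rmin d (Rmin d1 d2)) by (repeat apply Rmin_pos; try apply cond_pos; lra).
  exists (mkposreal _ H). simpl. intros h hn hl.
  pose proof (Rmin_l d (Rmin d1 d2)). pose proof (Rmin_r d (Rmin d1 d2)).
  pose proof (Rmin_l d1 d2). pose proof (Rmin_r d1 d2).
  pose proof (Rabs_le_between' h 0 (Rabs h)) as B. rewrite Rminus_0_r in B.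
  destruct (Rlt_dec h 0).
  - rewrite Rabs_left in hl by lra.
    rewrite (E1 (x+h)) by lra. rewrite (E1 x) by lra. apply P1; auto. rewrite Rabs_left; lra.
  - assert (0 < h) by lra. rewrite Rabs_right in hl by lra.
    rewrite (E2 (x+h)) by lra. rewrite (E2 x) by lra. apply P2; auto. rewrite Rabs_right; lra.
Qed.

Lemma loc_eq (f h : R -> R) t d : 0 < d -> (forall y, t - d < y < t + d -> h y = f y) ->
  locally t (fun y => h y = f y).
Proof.
  intros Hd E. exists (mkposreal d Hd). intros y Hy. apply E.
  unfold ball in Hy; simpl in Hy; unfold AbsRing_ball, abs, minus, plus, opp in Hy; simpl in Hy.
  apply Rabs_def2 in Hy. lra.
Qed.

Lemma item4 t : 0 <= t -> -1/2 <= t / g k t * Derive (g k) t <= 0.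
Proof.
  intros Ht. pose proof a_pos. pose proof s2_pos. pose proof s6_pos. pose proof ka2.
  pose proof a_sq as Ha2. pose proof s2_sq as Hs2. pose proof s6_sq as Hs6. pose proof ca.
  destruct (Req_dec t 0) as [E|Ht0].
  { subst. unfold Rdiv. rewrite !Rmult_0_l. lra. }
  destruct (Rlt_dec t a).
  - set (q := sqrt (1 - k * t^2)).
    assert (Hq: q * q = 1 - k*t^2). { apply sqrt_sqrt. assert (k*t^2 < k*(a*a)) by (apply Rmult_lt_compat_l; simpl; nra). lra. }
    assert (Hq2: 2/3 < q*q). { assert (k*t^2 < k*(a*a)) by (apply Rmult_lt_compat_l; simpl; nra). lra. }
    assert (q0: 0 < q). { pose proof (sqrt_pos (1 - k*t^2)) as SP. fold q in SP. nra. }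
    assert (D: is_derive (g k) t (-(k*t)/q)).
    { apply is_derive_ext_loc with (f := fun y => sqrt (1 - k*y^2)).
      - apply loc_eq with (Rmin t (a - t)). apply Rmin_pos; lra.
        intros y Hy. pose proof (Rmin_l t (a-t)). pose proof (Rmin_r t (a-t)).
        rewrite g_mid; auto. apply Rabs_def1; lra.
      - auto_derive. fold q. lra. replace (1 + - (k*(t*(t*1)))) with (1 - k*t^2) by ring. fold q. field. lra. }
    rewrite (is_derive_unique _ _ _ D). rewrite g_mid by (apply Rabs_def1; lra). fold q.
    replace (t / q * (- (k * t) / q)) with (- (k*t^2) / (q*q)) by (field; lra).
    rewrite Hq. split.
    + apply Rmult_le_reg_r with (1 - k*t^2). lra. replace (- (k*t^2) / (1 - k*t^2) * (1 - k*t^2)) with (-(k*t^2)) by (field; lra).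
      assert (k*t^2 < k*(a*a)) by (apply Rmult_lt_compat_l; simpl; nra). lra.
    + unfold Rdiv. assert (0 <= k*t^2) by (simpl; nra). assert (0 < /(1 - k*t^2)) by (apply Rinv_0_lt_compat; lra). nra.
  - destruct (Req_dec t a) as [Ea|Hta].
    + subst t. clear n Ht Ht0.
      set (q := sqrt (1 - k * a^2)).
      assert (Hq: q * q = 1 - k*a^2). { apply sqrt_sqrt. simpl. lra. }
      assert (q0: 0 < q). { pose proof (sqrt_pos (1 - k*a^2)) as SP. fold q in SP. simpl in Hq. nra. }
      assert (qa: q = a * s2). { assert (0 < a*s2) by nra. assert ((a*s2)*(a*s2) = q*q). { simpl in Hq. 
         replace ((a*s2)*(a*s2)) with ((a*a)*(s2*s2)) by ring. rewrite Ha2, Hs2, Hq. replace (k*(a*(a*1))) with (k*(a*a)) by ring. rewrite H2. field. lra. } nra. }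
      assert (V: f2 a = 2 * s6). { unfold f2. lra. }
      assert (D: is_derive (g k) a (-(k/s2))).
      { apply is_derive_Reals. apply glue with (h1 := fun y => sqrt (1 - k*y^2)) (h2 := f2) (d := a); auto.
        - apply is_derive_Reals. auto_derive. simpl; lra.
          replace (1 + - (k*(a*(a*1)))) with (1 - k*a^2) by ring. fold q. rewrite qa. field. lra.
        - apply is_derive_Reals. unfold f2. auto_derive. nra.
          replace (3 * s2 * a * (3 * s2 * a)) with 6 by (replace (3 * s2 * a * (3 * s2 * a)) with (9 * (s2*s2) * (a*a)) by ring; rewrite Ha2, Hs2; field; lra). replace (k / s2) with (s2 * s2 / 2 / s2) by (rewrite Hs2; field; lra). field. lra.
        - intros y Hy. destruct (Req_dec y a) as [->|Hya].
          + rewrite g_right by lra. rewrite V. fold q. rewrite qa.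
            assert (0 < a*s2) by nra. assert (0 < 2*s6) by lra.
            assert ((a*s2)*(a*s2) = (2*s6)*(2*s6)). { replace ((a*s2)*(a*s2)) with ((a*a)*(s2*s2)) by ring.
              replace ((2*s6)*(2*s6)) with (4 * (s6*s6)) by ring. rewrite Ha2, Hs2, Hs6. field. lra. } nra.
          + rewrite g_mid; auto. apply Rabs_def1; lra.
        - intros y Hy. apply g_right; lra. }
      rewrite (is_derive_unique _ _ _ D). rewrite g_right by lra. rewrite V.
      assert (kas: k * a / s2 = s6). { assert (0 < k*a/s2) by (apply Rdiv_lt_0_compat; nra).
        assert ((k*a/s2)*(k*a/s2) = s6*s6). { replace ((k*a/s2)*(k*a/s2)) with (k*k*(a*a)/(s2*s2)) by (field; lra).
          rewrite Ha2, Hs2, Hs6. field. lra. } nra. }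
      replace (a / (2 * s6) * - (k / s2)) with (- (k*a/s2) / (2*s6)) by (field; lra).
      rewrite kas. replace (- s6 / (2*s6)) with (-1/2) by (field; lra). lra.
    + assert (Hta': a < t) by lra. clear n Hta.
      assert (D: is_derive (g k) t (-(1/(3*s2*t))/t)).
      { apply is_derive_ext_loc with (f := f2).
        - apply loc_eq with (t - a). lra. intros y Hy. rewrite g_right; auto; lra.
        - unfold f2. auto_derive. nra. field. split; lra. }
      rewrite (is_derive_unique _ _ _ D). rewrite g_right by lra.
      pose proof (f2_bounds t ltac:(lra)). unfold f2 in *.
      set (w := 1 / (3*s2*t)) in *.
      assert (0 < w) by (apply Rdiv_lt_0_compat; [lra|]; repeat apply Rmult_lt_0_compat; lra).
      replace (t / (w + s6) * (- w / t)) with (- w / (w + s6)) by (field; split; lra).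
      split.
      * apply Rmult_le_reg_r with (w + s6). lra.
        replace (- w / (w + s6) * (w + s6)) with (-w) by (field; lra). lra.
      * unfold Rdiv. assert (0 < /(w+s6)) by (apply Rinv_0_lt_compat; lra). nra.
Qed.


Lemma r6s6 : sqrt 6 * s6 = 1.
Proof. unfold s6. rewrite <- sqrt_mult by lra. replace (6 * (1/6)) with 1 by field. apply sqrt_1. Qed.

Lemma r6_eq : sqrt 6 = 6 * s6.
Proof. pose proof r6s6. pose proof s6_sq. pose proof s6_pos.
  apply Rmult_eq_reg_r with s6; [|lra]. rewrite H. replace (6*s6*s6) with (6*(s6*s6)) by ring. rewrite H0. field. Qed.

Lemma G0 : G k 0 = 0.
Proof. unfold G. rewrite RInt_point. reflexivity. Qed.

Lemma Ginv_facts (Ginv : R -> R) (HG : forall t, G k (Ginv t) = t) t :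
  s6 * (Ginv t * Ginv t) <= t * Ginv t <= Ginv t * Ginv t /\ (Ginv t * Ginv t <= 6 * (t * t)) /\
  (t <> 0 -> 0 < t * Ginv t).
Proof.
  pose proof (K1 (Ginv t)) as K. rewrite HG in K. pose proof s6_pos. pose proof s6_sq.
  set (x := Ginv t) in *.
  split; [exact K|]. split.
  - destruct (Req_dec x 0) as [E|E]. rewrite E. nra.
    assert (0 < x*x) by nra.
    assert ((s6*(x*x))*(s6*(x*x)) <= (t*x)*(t*x)) by (apply Rmult_le_compat; nra).
    assert (s6*s6*(x*x) <= t*t). { apply Rmult_le_reg_r with (x*x); nra. }
    rewrite H0 in H3. lra.
  - intros Ht. destruct (Req_dec x 0) as [E|E].
    + exfalso. apply Ht. rewrite <- (HG t). fold x. rewrite E. apply G0.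
    + nra.
Qed.

End S.

Theorem lemma2p1 (kappa : R) (Hk : 0 < kappa)
  (Ginv : R -> R) (HGinv : forall t : R, G kappa (Ginv t) = t) :
  is_lim (fun t => Ginv t / t) 0 1 /\
  is_lim (fun t => Ginv t / t) p_infty (sqrt 6) /\
  (forall t : R, 0 <= t -> t <= Ginv t <= sqrt 6 * t) /\
  (forall t : R, 0 <= t ->
     -1/2 <= t / g kappa t * Derive (g kappa) t <= 0).
Proof.
  pose proof (s6_pos) as s6p. pose proof (s6_sq) as s6q. pose proof r6s6 as R6. pose proof r6_eq as R6e.
  pose proof (a_pos kappa Hk) as ap. pose proof (a_sq kappa Hk) as aq. pose proof (ka2 kappa Hk) as kaq.
  set (s6 := sqrt (1/6)) in *. set (a := sqrt (1 / (3 * kappa))) in *.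
  pose proof (Ginv_facts kappa Hk Ginv HGinv) as GF.
  split; [|split; [|split]].
  - apply is_lim_spec. intros eps. simpl.
    set (m := Rmin eps (1/2)).
    assert (m0 : 0 < m) by (apply Rmin_pos; [apply cond_pos|lra]).
    assert (mpos: 0 < m / (12*kappa)) by (apply Rdiv_lt_0_compat; lra).
    set (dl := sqrt (m / (12*kappa))).
    assert (dpos: 0 < dl) by (apply sqrt_lt_R0; auto).
    assert (dlq: dl * dl = m / (12*kappa)) by (apply sqrt_sqrt; lra).
    exists (mkposreal dl dpos). intros t Ht Ht0.
    unfold ball in Ht; simpl in Ht; unfold AbsRing_ball, abs, minus, plus, opp in Ht; simpl in Ht.
    rewrite Ropp_0, Rplus_0_r in Ht.
    assert (tt: t * t < m / (12*kappa)). { rewrite (sq_abs t). pose proof (Rabs_pos t). nra. }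
    destruct (GF t) as [[A1 A2] [A3 A4]]. specialize (A4 Ht0).
    set (x := Ginv t) in *.
    assert (x0: x <> 0). { intro E. rewrite E in A4. lra. }
    assert (u0: kappa * (x*x) <= 6 * kappa * (t*t)) by nra.
    assert (um: 6 * kappa * (t*t) < m / 2). { apply Rmult_lt_compat_l with (r := 12*kappa) in tt; [|lra].
      replace (12 * kappa * (m / (12 * kappa))) with m in tt by (field; lra). lra. }
    assert (xa: Rabs x < a). { assert (x*x < a*a). { rewrite aq. assert (kappa*(x*x) < kappa * (1/(3*kappa))).
        { replace (kappa * (1/(3*kappa))) with (1/3) by (field; lra). pose proof (Rmin_r eps (1/2)). fold m in H. lra. }
        apply Rmult_lt_reg_l with kappa; lra. }
      rewrite (sq_abs x) in H. pose proof (Rabs_pos x). nra. }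
    pose proof (K2 kappa Hk x xa) as K. unfold x in K. rewrite HGinv in K. fold x in K.
    replace (x / t) with ((x*x)/(t*x)) by (field; split; auto).
    set (p := t*x) in *. set (X := x*x) in *.
    assert (r1: 1 <= X / p). { apply Rmult_le_reg_r with p; auto. unfold Rdiv. rewrite Rmult_assoc, Rinv_l by lra. lra. }
    rewrite Rabs_right by lra.
    assert (X / p < 1 + eps); [|lra].
    apply Rmult_lt_reg_r with p; auto. unfold Rdiv. rewrite Rmult_assoc, Rinv_l by lra. rewrite Rmult_1_r.
    pose proof (Rmin_l eps (1/2)). pose proof (Rmin_r eps (1/2)). fold m in H, H0.
    pose proof (cond_pos eps).
    set (u := kappa * X) in *.
    assert (Xp: 0 < X) by (unfold X; nra).
    assert (u * (1 + eps) < eps).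
    { destruct (Rle_dec eps (1/2)). nra. nra. }
    assert (X < (1 + eps) * ((1 - u) * X)) by nra. nra.
  - apply is_lim_spec. intros eps. simpl.
    pose proof (cond_pos eps) as ep.
    destruct (K3 kappa Hk (eps/12) ltac:(lra)) as [M0 [M0p HM]]. fold s6 in HM.
    exists (Rmax M0 (M0 / (eps/12))). intros t Ht.
    pose proof (Rmax_l M0 (M0 / (eps/12))). pose proof (Rmax_r M0 (M0 / (eps/12))).
    destruct (GF t) as [[A1 A2] [A3 A4]]. assert (tp: 0 < t) by lra. specialize (A4 ltac:(lra)).
    set (x := Ginv t) in *.
    assert (xp: 0 < x) by nra.
    assert (tx: t <= x) by nra.
    assert (xt: x <= sqrt 6 * t). { rewrite R6e. assert (s6*x <= t) by nra. assert (6*s6*(s6*x) <= 6*s6*t) by (apply Rmult_le_compat_l; lra). replace (6*s6*(s6*x)) with (6*(s6*s6)*x) in H2 by ring. rewrite s6q in H2. lra. }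
    specialize (HM x ltac:(lra)). unfold x in HM. rewrite HGinv in HM. fold x in HM.
    assert (dt: M0 < eps/12 * t). { apply Rmult_lt_reg_r with (/(eps/12)). apply Rinv_0_lt_compat; lra.
      replace (eps/12 * t * / (eps/12)) with t by (field; lra). unfold Rdiv in H0. lra. }
    assert (H1: t < x * (s6 + 2 * (eps/12))) by nra.
    set (r := x / t).
    assert (xr: x = r * t) by (unfold r; field; lra).
    rewrite xr in H1, xt.
    assert (r <= sqrt 6) by nra.
    assert (1 < r * (s6 + 2*(eps/12))) by nra.
    assert ((sqrt 6 - eps) * (s6 + 2*(eps/12)) <= 1) by (rewrite R6e; nra).
    assert (sqrt 6 - eps < r) by nra.
    apply Rabs_def1; lra.
  - intros t Ht. destruct (GF t) as [[A1 A2] [A3 A4]].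
    set (x := Ginv t) in *.
    destruct (Req_dec t 0) as [E|E].
    + subst t. assert (x = 0) by nra. rewrite H. lra.
    + specialize (A4 E). assert (xp: 0 < x) by nra. split. nra. rewrite R6e. assert (s6*x <= t) by nra. assert (6*s6*(s6*x) <= 6*s6*t) by (apply Rmult_le_compat_l; lra). replace (6*s6*(s6*x)) with (6*(s6*s6)*x) in H0 by ring. rewrite s6q in H0. lra.
  - apply item4; auto.
Qed.
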